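(* Let $p\ge 2$ be an integer and $\eta>0$. Then $\tau_\ell^-(s)\le\frac{\pi}{2}$ for every $s\in[0,1]$.
   Context: For an integer $p\ge 2$ and a real parameter $\eta>-1$, define for $\tau\ge 0$ and $s\in[-1,1]$ $$\ell_-(\tau,s)=\cos\tau\,\sin\!\Big(\tau\eta s-\tfrac{\pi}{p}\Big)+s\sin\tau\,\cos\!\Big(\tau\eta s-\tfrac{\pi}{p}\Big),$$ and let $\tau_\ell^-(s)$ be the smallest positive root in $\tau$ of $\ell_-(\tau,s)=0$. *)

(* Defs.v *)
From Stdlib Require Import Reals.
Open Scope R_scope.

Definition ell_minus (p : nat) (eta tau s : R) : R :=
  cos tau * sin (tau * eta * s - PI / INR p)
  + s * sin tau * cos (tau * eta * s - PI / INR p).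

Definition is_smallest_pos_root (f : R -> R) (t : R) : Prop :=
  0 < t /\ f t = 0 /\ (forall u, 0 < u < t -> f u <> 0).

Definition is_tau_l_minus (p : nat) (eta s t : R) : Prop :=
  is_smallest_pos_root (fun tau => ell_minus p eta tau s) t.

(* Main.v *)
Require Import Defs.
From Stdlib Require Import Reals Lra.
Open Scope R_scope.

Lemma cont_neg (f : R -> R) x : continuity_pt f x -> f x < 0 ->
  exists d, d > 0 /\ forall y, Rabs (y - x) < d -> f y < 0.
Proof.
  intros Hc Hx. destruct (Hc (- f x)) as [d [Hd H]]; [lra|].
  exists d; split; auto. intros y Hy.
  destruct (Req_dec y x) as [->|Hne]; [lra|].
  assert (Hd' := H y (conj (conj I (not_eq_sym Hne)) Hy)).
  simpl in Hd'. unfold R_dist in Hd'. apply Rabs_def2 in Hd'. lra.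
Qed.

Lemma cont_pos (f : R -> R) x : continuity_pt f x -> f x > 0 ->
  exists d, d > 0 /\ forall y, Rabs (y - x) < d -> f y > 0.
Proof.
  intros Hc Hx. destruct (Hc (f x)) as [d [Hd H]]; [lra|].
  exists d; split; auto. intros y Hy.
  destruct (Req_dec y x) as [->|Hne]; [lra|].
  assert (Hd' := H y (conj (conj I (not_eq_sym Hne)) Hy)).
  simpl in Hd'. unfold R_dist in Hd'. apply Rabs_def2 in Hd'. lra.
Qed.

Lemma smallest_root (f : R -> R) T : continuity f -> f 0 < 0 -> 0 < T -> 0 <= f T ->
  exists t, is_smallest_pos_root f t /\ t <= T.
Proof.
  intros Hc H0 HT HfT.
  set (E := fun x => 0 <= x <= T /\ forall y, 0 <= y <= x -> f y < 0).
  destruct (completeness E) as [t [Hub Hlub]].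
  { exists T. intros x [Hx _]. lra. }
  { exists 0. split; [lra|]. intros y Hy. replace y with 0 by lra. auto. }
  assert (HtT : t <= T). { apply Hlub. intros x [Hx _]. lra. }
  destruct (cont_neg f 0 (Hc 0) H0) as [d [Hd Hn]].
  assert (Ht0 : 0 < t).
  { set (m := Rmin (d/2) T).
    assert (0 < m) by (unfold m; apply Rmin_glb_lt; lra).
    assert (m <= d/2) by apply Rmin_l. assert (m <= T) by apply Rmin_r.
    assert (E m). { split; [lra|]. intros y Hy. apply Hn. rewrite Rabs_right; lra. }
    specialize (Hub m H3). lra. }
  assert (Hbelow : forall u, 0 <= u < t -> f u < 0).
  { intros u Hu. apply Rnot_le_lt; intro Hf.
    assert (t <= u); [|lra].
    apply Hlub. intros x [Hx1 Hx2]. destruct (Rle_lt_dec x u) as [|Hlt]; auto.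
    assert (f u < 0) by (apply Hx2; lra). lra. }
  assert (Hft : f t = 0).
  { destruct (Rtotal_order (f t) 0) as [Hl|[Heq|Hg]]; auto.
    - destruct (Req_dec t T) as [->|HneT]; [lra|].
      destruct (cont_neg f t (Hc t) Hl) as [d' [Hd' Hn']].
      set (m := Rmin (t + d'/2) T).
      assert (m <= t + d'/2) by apply Rmin_l. assert (m <= T) by apply Rmin_r.
      assert (t < m) by (unfold m; apply Rmin_glb_lt; lra).
      assert (E m). { split; [lra|]. intros y Hy.
        destruct (Rlt_le_dec y t). apply Hbelow; lra.
        apply Hn'. rewrite Rabs_right; lra. }
      specialize (Hub m H3). lra.
    - destruct (cont_pos f t (Hc t) Hg) as [d' [Hd' Hp']].
      set (u := Rmax (t - d'/2) 0).
      assert (t - d'/2 <= u) by apply Rmax_l. assert (0 <= u) by apply Rmax_r.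
      assert (u < t) by (unfold u; apply Rmax_lub_lt; lra).
      assert (f u < 0) by (apply Hbelow; lra).
      assert (f u > 0) by (apply Hp'; rewrite Rabs_left; lra). lra. }
  exists t. split; auto. split; auto. split; auto.
  intros u Hu. assert (f u < 0) by (apply Hbelow; lra). lra.
Qed.

Theorem mainTheorem5 (p : nat) (eta : R) :
  (2 <= p)%nat -> 0 < eta ->
  forall s : R, 0 <= s <= 1 ->
  exists t : R, is_tau_l_minus p eta s t /\ t <= PI / 2.
Proof.
  intros Hp He s Hs. unfold is_tau_l_minus.
  assert (HP : 2 <= INR p) by (replace 2 with (INR 2) by (simpl; lra); apply le_INR; auto).
  assert (Hpi := PI_RGT_0).
  set (q := PI / INR p).
  assert (Hq0 : 0 < q) by (unfold q; apply Rdiv_lt_0_compat; lra).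
  assert (Hq1 : q <= PI / 2).
  { unfold q. apply Rmult_le_compat_l; [lra|]. apply Rinv_le_contravar; lra. }
  set (f := fun tau => ell_minus p eta tau s).
  assert (Hc : continuity f).
  { intro x. unfold f, ell_minus. fold q. reg. }
  assert (Hf0 : f 0 < 0).
  { unfold f, ell_minus. fold q. rewrite cos_0, sin_0.
    replace (0 * eta * s - q) with (- q) by ring. rewrite sin_neg.
    assert (0 < sin q) by (apply sin_gt_0; lra). lra. }
  destruct (Req_dec s 0) as [Hs0|Hs0].
  - apply (smallest_root f); auto. lra.
    unfold f, ell_minus. rewrite cos_PI2, Hs0. lra.
  - assert (Hes : 0 < eta * s) by (apply Rmult_lt_0_compat; lra).
    set (t0 := q / (eta * s)).
    assert (Ht0 : 0 < t0) by (apply Rdiv_lt_0_compat; lra).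
    destruct (Rle_lt_dec t0 (PI/2)) as [Hle|Hlt].
    + destruct (smallest_root f t0) as [t [Ht1 Ht2]]; auto.
      * unfold f, ell_minus. fold q.
        replace (t0 * eta * s - q) with 0 by (unfold t0; field; lra).
        rewrite sin_0, cos_0.
        assert (0 < sin t0) by (apply sin_gt_0; lra).
        assert (0 < s * sin t0) by (apply Rmult_lt_0_compat; lra). lra.
      * exists t; split; auto; lra.
    + apply (smallest_root f); auto. lra.
      unfold f, ell_minus. fold q. rewrite cos_PI2, sin_PI2.
      assert (Ha : PI / 2 * eta * s < q).
      { unfold t0 in Hlt. apply Rmult_lt_compat_r with (r := eta * s) in Hlt; auto.
        replace (q / (eta * s) * (eta * s)) with q in Hlt by (field; lra).
        rewrite Rmult_assoc; lra. }
      assert (0 < PI / 2 * eta * s).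
      { rewrite Rmult_assoc. apply Rmult_lt_0_compat; lra. }
      assert (0 < cos (PI / 2 * eta * s - q)) by (apply cos_gt_0; lra).
      assert (0 < s * 1 * cos (PI / 2 * eta * s - q)) by (apply Rmult_lt_0_compat; lra).
      lra.
Qed.
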